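(* Let $q\ge 2$ and $n\ge 1$ be integers, $N=\{1,\dots,n\}$, $F^c=\{-\tfrac{q-1}{2},-\tfrac{q-3}{2},\dots,\tfrac{q-3}{2},\tfrac{q-1}{2}\}$ and $\Omega=(F^c)^N$. For each subset $A\subset N$ with $|A|\ge 2$ let $J_A\ge 0$ be given, and define $H_\gamma=-\sum_{A}J_A\,\delta_{(\sigma^A)_\gamma}$, where for $A=\{i_1,\dots,i_k\}$, $\delta_{(\sigma^A)_\gamma}=1$ if $(\sigma_{i_1})_\gamma=\dots=(\sigma_{i_k})_\gamma$ and $0$ otherwise. Let $Z_\gamma=\exp(-H_\gamma)=\prod_A x_A^{\delta_{(\sigma^A)_\gamma}}$ with $x_A=e^{J_A}$, $Z=\sum_{\gamma\in\Omega}Z_\gamma$ and $P(\gamma)=Z_\gamma/Z$. For a finite list $R$ of elements of $N$ (repetitions allowed) set $\sigma^R=\prod_{i\in R}\sigma_i$ (product over the list with multiplicity, $\sigma^\emptyset\equiv1$), where $\sigma_i(\gamma)=(\sigma_i)_\gamma$ is the $i$-th coordinate of $\gamma$. Then for every such list $R$, $$\langle\sigma^R\rangle=\sum_{\gamma\in\Omega}(\sigma^R)_\gamma P(\gamma)\ \ge 0.$$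
   Context: This is a generalized ferromagnetic $q$-state Potts model with multi-spin interactions, with spin values taken in the centered set $F^c$ (equivalently, $\sigma_i$ is the Potts spin in $\{1,\dots,q\}$ minus $(q+1)/2$); the inverse temperature is set to $1$. The paper formally also permits $J_A=+\infty$. *)

(* Defs.v *)
From HB Require Import structures.
From mathcomp Require Import all_boot all_order all_algebra.
From mathcomp Require Import reals.
From mathcomp Require Import sequences exp.
Set Implicit Arguments. Unset Strict Implicit. Unset Printing Implicit Defensive.
Import Order.TTheory GRing.Theory Num.Theory.
Local Open Scope ring_scope.

(* Configurations: gamma : {ffun 'I_n -> 'I_q}; Potts value k in {0..q-1}
   (i.e. the usual 1..q shifted by one), centred spin value in F^c. *)
Definition config (n q : nat) := {ffun 'I_n -> 'I_q}.

Definition spinc (R : realType) (q : nat) (k : 'I_q) : R :=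
  k%:R - (q%:R - 1) / 2.

Definition deltaA (n q : nat) (A : {set 'I_n}) (g : config n q) : bool :=
  [forall i in A, forall j in A, g i == g j].

Definition Ham (R : realType) (n q : nat) (J : {set 'I_n} -> R)
  (g : config n q) : R :=
  - \sum_(A : {set 'I_n} | (2 <= #|A|)%N) (J A * (deltaA A g)%:R)%R.

Definition Zg (R : realType) (n q : nat) (J : {set 'I_n} -> R)
  (g : config n q) : R := expR (- Ham J g).

Definition Zpart (R : realType) (n q : nat) (J : {set 'I_n} -> R) : R :=
  \sum_(g : config n q) Zg J g.

Definition Prob (R : realType) (n q : nat) (J : {set 'I_n} -> R)
  (g : config n q) : R := Zg J g / Zpart q J.

Definition sigmaR (R : realType) (n q : nat) (L : seq 'I_n)
  (g : config n q) : R := \prod_(i <- L) spinc R (g i).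

Definition expect (R : realType) (n q : nat) (J : {set 'I_n} -> R)
  (L : seq 'I_n) : R :=
  \sum_(g : config n q) sigmaR R L g * Prob J g.

(* Main.v *)
Require Import Defs.
From HB Require Import structures.
From mathcomp Require Import all_boot all_order all_algebra.
From mathcomp Require Import reals.
From mathcomp Require Import sequences exp.
From mathcomp Require Import ring lra.
Set Implicit Arguments. Unset Strict Implicit. Unset Printing Implicit Defensive.
Import Order.TTheory GRing.Theory Num.Theory.
Local Open Scope ring_scope.

Definition E0 (n q : nat) (T : seq {set 'I_n}) (g : config n q) : bool :=
  all (fun B => deltaA B g) T.

Definition rl (n q : nat) (T : seq {set 'I_n}) (a b : 'I_n) : bool :=
  [forall g : config n q, E0 T g ==> (g a == g b)].

Lemma rl_sym n q T a b : @rl n q T a b -> rl q T b a.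
Proof.
move/forallP=> H; apply/forallP=> g; apply/implyP=> Hg.
by have /implyP/(_ Hg)/eqP -> := H g.
Qed.

Lemma rl_trans n q T a b c : @rl n q T a b -> rl q T b c -> rl q T a c.
Proof.
move/forallP=> H1 /forallP H2; apply/forallP=> g; apply/implyP=> Hg.
have /implyP/(_ Hg)/eqP -> := H1 g.
by have /implyP/(_ Hg) := H2 g.
Qed.

Lemma rl_refl n q T a : @rl n q T a a.
Proof. by apply/forallP=> g; apply/implyP. Qed.

Lemma rl_E0 n q T (g : config n q) a b : E0 T g -> rl q T a b -> g a = g b.
Proof. by move=> Hg /forallP/(_ g)/implyP/(_ Hg)/eqP. Qed.

Lemma const_prod (R : realType) (I : eqType) (L : seq I) (P : pred I)
  (f : I -> R) x :
  (forall j, P j -> f j = x) -> \prod_(j <- L | P j) f j = x ^+ count P L.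
Proof.
move=> H; elim: L => [|a L IH]; first by rewrite big_nil.
rewrite big_cons /=; case: ifP => Pa; last by rewrite IH.
by rewrite IH H // exprS.
Qed.

Lemma sigma_pos (R : realType) n q T (g : config n q) :
  E0 T g -> forall k L, (size L <= k)%N ->
  (forall i, ~~ odd (count (rl q T i) L)) -> 0 <= sigmaR R L g.
Proof.
move=> Hg; elim=> [|k IH] [|a L] //= hs Hev; rewrite /sigmaR ?big_nil //.
rewrite (bigID (rl q T a)) /=; apply: mulr_ge0.
  rewrite (@const_prod _ _ _ _ _ (spinc R (g a))).
    exact: exprn_even_ge0 (Hev a).
  by move=> j hj; rewrite (rl_E0 Hg hj).
rewrite -big_filter; apply: IH.
  rewrite size_filter /= rl_refl /=.
  by apply: leq_trans (count_size _ _) hs.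
move=> i; rewrite count_filter.
case Hia: (rl q T i a).
  rewrite (eq_count (a2 := pred0)) ?count_pred0 // => j /=.
  apply/negbTE/negP => /andP [hij /negP]; apply.
  exact: rl_trans (rl_sym Hia) hij.
rewrite (eq_count (a2 := rl q T i)); first exact: Hev.
move=> j /=; case hij: (rl q T i j) => //=.
apply/negP => haj; move/negbT/negP: Hia; apply.
exact: rl_trans hij (rl_sym haj).
Qed.

Definition flip (n q : nat) (T : seq {set 'I_n}) (i0 : 'I_n) (g : config n q)
  : config n q := [ffun k => if rl q T i0 k then rev_ord (g k) else g k].

Lemma flipK n q T i0 : involutive (@flip n q T i0).
Proof.
move=> g; apply/ffunP => k; rewrite !ffunE.
by case: (rl q T i0 k) => //; rewrite rev_ordK.
Qed.

Lemma flip_E0 n q T i0 (g : config n q) : E0 T g -> E0 T (flip T i0 g).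
Proof.
move=> Hg; apply/allP => B hB; have := allP Hg B hB.
move/forall_inP => Hd; apply/forall_inP => a ha; apply/forall_inP => b hb.
have /forall_inP/(_ b hb)/eqP gab := Hd a ha.
have rab : rl q T a b.
  apply/forallP => g'; apply/implyP => Hg'.
  by have /forall_inP/(_ a ha)/forall_inP/(_ b hb) := allP Hg' B hB.
rewrite !ffunE.
have -> : rl q T i0 b = rl q T i0 a.
  by apply/idP/idP => h; [exact: rl_trans h (rl_sym rab) | exact: rl_trans h rab].
by rewrite gab.
Qed.

Lemma spinc_rev (R : realType) q (k : 'I_q) :
  spinc R (rev_ord k) = - spinc R k.
Proof.
rewrite /spinc /= natrB ?ltn_ord // -addn1 natrD.
by field.
Qed.

Lemma sigma_flip (R : realType) n q T i0 (g : config n q) L :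
  sigmaR R L (flip T i0 g) = (-1) ^+ count (rl q T i0) L * sigmaR R L g.
Proof.
rewrite /sigmaR; elim: L => [|a L IH]; first by rewrite !big_nil mulr1.
rewrite !big_cons IH /= ffunE; case: (rl q T i0 a) => /=.
  by rewrite spinc_rev exprS mulN1r !mulNr; congr (- _); exact: mulrCA.
by rewrite add0n; exact: mulrCA.
Qed.

Lemma core (R : realType) n q T (L : seq 'I_n) :
  0 <= \sum_(g : config n q) sigmaR R L g * \prod_(B <- T) (deltaA B g)%:R.
Proof.
have -> : \sum_(g : config n q) sigmaR R L g * \prod_(B <- T) (deltaA B g)%:R
   = \sum_(g : config n q | E0 T g) sigmaR R L g.
  rewrite [RHS]big_mkcond; apply: eq_bigr => g _.
  have -> : \prod_(B <- T) ((deltaA B g)%:R : R) = (E0 T g)%:R.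
    rewrite /E0; elim: T => [|B T IH]; first by rewrite big_nil.
    by rewrite big_cons IH /=; case: (deltaA B g); rewrite ?mul1r ?mul0r.
  by case: (E0 T g); rewrite ?mulr1 ?mulr0.
case: (boolP [exists i, odd (count (rl q T i) L)]).
  case/existsP => i0 hodd.
  have HS : \sum_(g : config n q | E0 T g) sigmaR R L g
      = - \sum_(g : config n q | E0 T g) sigmaR R L g.
    rewrite {1}(reindex_inj (can_inj (flipK T i0))) -sumrN.
    rewrite (eq_bigl (fun g => E0 T g)); last first.
      move=> g; apply/idP/idP => h; last exact: flip_E0 h.
      by rewrite -(flipK T i0 g); apply: flip_E0 h.
    apply: eq_bigr => g _.
    by rewrite sigma_flip -signr_odd hodd expr1 mulN1r.
  lra.
move/existsPn => Hev; apply: sumr_ge0 => g Hg.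
exact: (sigma_pos R Hg (leqnn _) Hev).
Qed.

Lemma aux (R : realType) (s x y c d : R) :
  s * ((1 + c * d) * x * y) = s * (x * y) + c * (s * (x * (d * y))).
Proof. by ring. Qed.

Lemma expand (R : realType) n q (L : seq 'I_n) (P : pred {set 'I_n})
  (c : {set 'I_n} -> R) (hc : forall A, P A -> 0 <= c A) r :
  forall T, 0 <= \sum_(g : config n q) sigmaR R L g *
     (\prod_(A <- r | P A) (1 + c A * (deltaA A g)%:R) *
      \prod_(B <- T) (deltaA B g)%:R).
Proof.
elim: r => [|a r IH] T.
  under eq_bigr do rewrite big_nil mul1r.
  exact: core.
case Pa: (P a).
  set X := fun g : config n q => \prod_(A <- r | P A) (1 + c A * (deltaA A g)%:R).
  rewrite (eq_bigr (fun g => sigmaR R L g * (X g * \prod_(B <- T) (deltaA B g)%:R)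
     + c a * (sigmaR R L g * (X g * \prod_(B <- a :: T) (deltaA B g)%:R)))); last first.
    by move=> g _; rewrite big_cons Pa big_cons /X; apply: aux.
  rewrite big_split /= -mulr_sumr; apply: addr_ge0; first exact: IH.
  by apply: mulr_ge0; [exact: hc | exact: IH].
under eq_bigr do rewrite big_cons Pa.
exact: IH.
Qed.

Theorem theorem1 (R : realType) (n q : nat) (hq : (2 <= q)%N) (hn : (1 <= n)%N)
  (J : {set 'I_n} -> R)
  (hJ : forall A : {set 'I_n}, (2 <= #|A|)%N -> 0 <= J A)
  (L : seq 'I_n) :
  0 <= expect q J L.
Proof.
rewrite /expect /Prob.
under eq_bigr do rewrite mulrA.
rewrite -mulr_suml; apply: divr_ge0; last first.
  by apply: sumr_ge0 => g _; exact: expR_ge0.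
have hc : forall A : {set 'I_n}, (2 <= #|A|)%N -> 0 <= expR (J A) - 1.
  by move=> A hA; have := expR_ge1Dx (J A); have := hJ A hA; lra.
have H := @expand R n q L (fun A => (2 <= #|A|)%N) (fun A => expR (J A) - 1) hc
  (index_enum {set 'I_n}) [::].
have -> : \sum_(g : config n q) sigmaR R L g * Zg J g =
   \sum_(g : config n q) sigmaR R L g *
     (\prod_(A <- index_enum {set 'I_n} | (2 <= #|A|)%N) (1 + (expR (J A) - 1) * (deltaA A g)%:R)
      * \prod_(B <- [::]) (deltaA B g)%:R).
  apply: eq_bigr => g _; rewrite big_nil mulr1; congr (_ * _).
  rewrite /Zg /Ham opprK expR_sum; apply: eq_bigr => A _.
  by case: (deltaA A g); rewrite ?mulr1 ?mulr0 ?expR0 ?addr0 // addrC subrK.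
exact: H.
Qed.
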